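(* Let $(C^n)_{n\ge0}$, together with $(\phi^n)_{n\ge 0}$ and $E^n=-\partial_h\phi^n$, be a solution of the fully discrete scheme described in the context, and for each $n\ge0$ denote by $C^{(1,n+1)}_2$ the intermediate coefficient $C^{(1)}_2$ computed in Step 1 when computing $C^{n+1}$ from $C^n$. Then for all $n\ge1$, $$\lambda^2\,\frac{\partial_hE^{n+1}-2\,\partial_hE^{n}+\partial_hE^{n-1}}{\Delta t^2}+\partial_h\big(E^{n+1}C^{n+1}_0\big)=\partial_h^2\Big(\sqrt{2}\,T_0\,C^{(1,n+1)}_2+T_0\,C^{n+1}_0\Big)+\lambda^2\,\Delta t\,\partial_h\Big(\frac{E^{n+1}\,\partial_hE^{n+1}-E^{n}\,\partial_hE^{n}}{\Delta t}\Big).$$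
   Context: Parameters: $T_0>0$, $\lambda>0$, $\Delta t>0$, $N_H\in\mathbb{N}^*$. Mesh: $a<b$, $N_x\in\mathbb{N}^*$, $\mathcal{J}=\{1,\dots,N_x\}$, points $a=x_{1/2}<x_1<x_{3/2}<\dots<x_{N_x}<x_{N_x+1/2}=b$, $\Delta x_j=x_{j+1/2}-x_{j-1/2}$. A grid function is $C=(C_j)_{j\in\mathcal{J}}$, with indices understood periodically. Discrete derivative: $(\partial_h C)_j=(C_{j+1}-C_{j-1})/(2\Delta x_j)$. Products of grid functions are pointwise, $1$ denotes the constant grid function. Scheme: unknowns $C^n=(C^n_k)_{0\le k\le N_H}$ (grid functions), with conventions $C_{-1}=0$ and $C_k=0$ for $k>N_H$. Given $C^n$, Step 1 finds grid functions $C^{(1)}=(C^{(1)}_k)_{0\le k\le N_H}$ and $\phi^{(1)}$ with $\sum_j\Delta x_j\phi^{(1)}_j=0$ such that $\frac{C^{(1)}_1-C^n_1}{\Delta t}+\sqrt{T_0}\,\partial_hC^{(1)}_0+\sqrt{2T_0}\,\partial_hC^{(1)}_2-\frac{1}{\sqrt{T_0}}E^{(1)}=0$, $\frac{C^{(1)}_k-C^n_k}{\Delta t}+\sqrt{kT_0}\,\partial_hC^{(1)}_{k-1}+\sqrt{(k+1)T_0}\,\partial_hC^{(1)}_{k+1}=0$ for $k\in\{0,\dots,N_H\}\setminus\{1\}$, $E^{(1)}=-\partial_h\phi^{(1)}$, $-\lambda^2\partial_h^2\phi^{(1)}=C^{(1)}_0-1$. Step 2 sets $C^{n+1}_0=C^{(1)}_0$,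 $E^{n+1}=E^{(1)}$, $\phi^{n+1}=\phi^{(1)}$, and for $k=1,\dots,N_H$: $\frac{C^{n+1}_k-C^{(1)}_k}{\Delta t}-\sqrt{\frac{k}{T_0}}\,E^{n+1}\big(C^{n+1}_{k-1}-\delta_{k,1}\big)=0$ ($\delta$ the Kronecker symbol). *)

(* Defs.v *)
From HB Require Import structures.
From mathcomp Require Import all_boot all_order all_algebra.
From mathcomp Require Import reals.
Set Implicit Arguments. Unset Strict Implicit. Unset Printing Implicit Defensive.
Import Order.TTheory GRing.Theory Num.Theory.
Local Open Scope ring_scope.

(* Grid functions on the periodic mesh J = {1..Nx}, represented by 'I_Nx;
   the neighbours j+1 and j-1 are taken cyclically (ordS / ord_pred). *)
Definition grid (R : realType) (Nx : nat) := 'I_Nx -> R.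

Definition dh (R : realType) (Nx : nat) (dx : 'I_Nx -> R) (C : 'I_Nx -> R)
  : 'I_Nx -> R :=
  fun j => (C (ordS j) - C (ord_pred j)) / (2 * dx j).

Definition coef (R : realType) (Nx NH : nat) (C : nat -> 'I_Nx -> R) (k : nat)
  : 'I_Nx -> R :=
  if (k <= NH)%N then C k else (fun _ => 0).

Definition coefm (R : realType) (Nx NH : nat) (C : nat -> 'I_Nx -> R) (k : nat)
  : 'I_Nx -> R :=
  if k is k'.+1 then coef NH C k' else (fun _ => 0).

Definition Efield (R : realType) (Nx : nat) (dx : 'I_Nx -> R) (phi : 'I_Nx -> R)
  : 'I_Nx -> R := fun j => - dh dx phi j.

Definition poisson (R : realType) (Nx : nat) (lam : R) (dx : 'I_Nx -> R)
  (phi C0 : 'I_Nx -> R) : Prop :=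
  (\sum_(j < Nx) dx j * phi j = 0) /\
  (forall j, - lam ^+ 2 * dh dx (dh dx phi) j = C0 j - 1).

Definition step1 (R : realType) (Nx NH : nat) (T0 lam dt : R) (dx : 'I_Nx -> R)
  (Cn C1 : nat -> 'I_Nx -> R) (phi1 : 'I_Nx -> R) : Prop :=
  let E1 := Efield dx phi1 in
  poisson lam dx phi1 (C1 0%N) /\
  (forall j, (C1 1%N j - Cn 1%N j) / dt
             + Num.sqrt T0 * dh dx (coef NH C1 0) j
             + Num.sqrt (2 * T0) * dh dx (coef NH C1 2) j
             - (Num.sqrt T0)^-1 * E1 j = 0) /\
  (forall k, (k <= NH)%N -> k <> 1%N -> forall j,
      (C1 k j - Cn k j) / dt
      + Num.sqrt (k%:R * T0) * dh dx (coefm NH C1 k) j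
      + Num.sqrt ((k.+1)%:R * T0) * dh dx (coef NH C1 k.+1) j = 0).

Definition step2 (R : realType) (Nx NH : nat) (T0 dt : R) (dx : 'I_Nx -> R)
  (C1 Cnext : nat -> 'I_Nx -> R) (phinext : 'I_Nx -> R) : Prop :=
  let E := Efield dx phinext in
  Cnext 0%N = C1 0%N /\
  (forall k, (1 <= k <= NH)%N -> forall j,
      (Cnext k j - C1 k j) / dt
      - Num.sqrt (k%:R / T0) * E j * (coefm NH Cnext k j - (k == 1%N)%:R) = 0).

(* A solution of the fully discrete scheme: C n = C^n, phi n = phi^n,
   C1 (n+1) = the intermediate C^{(1)} computed when passing from C^n to
   C^{n+1}.  phi^0 is the Poisson potential of C^0_0. *)
Definition scheme_solution (R : realType) (Nx NH : nat) (T0 lam dt : R)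
  (dx : 'I_Nx -> R) (C C1 : nat -> nat -> 'I_Nx -> R) (phi : nat -> 'I_Nx -> R)
  : Prop :=
  poisson lam dx (phi 0%N) (C 0%N 0%N) /\
  forall n, step1 NH T0 lam dt dx (C n) (C1 n.+1) (phi n.+1) /\
            step2 NH T0 dt dx (C1 n.+1) (C n.+1) (phi n.+1).

(* Main.v *)
Require Import Defs.
From HB Require Import structures.
From mathcomp Require Import all_boot all_order all_algebra.
From mathcomp Require Import reals.
From mathcomp Require Import ring.
Import Order.TTheory GRing.Theory Num.Theory.
Local Open Scope ring_scope.
Set Implicit Arguments.

Lemma dhE (R : realType) Nx (dx : 'I_Nx -> R) f p :
  dh dx f p = (f (ordS p) - f (ord_pred p)) / (2 * dx p).
Proof. by []. Qed.

Lemma dh_ext (R : realType) Nx (dx : 'I_Nx -> R) f g p :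
  (forall i, f i = g i) -> dh dx f p = dh dx g p.
Proof. by move=> H; rewrite !dhE !H. Qed.

Lemma dh_lin (R : realType) Nx (dx : 'I_Nx -> R) a b f g p :
  dh dx (fun i => a * f i + b * g i) p = a * dh dx f p + b * dh dx g p.
Proof. rewrite !dhE; ring. Qed.

Lemma dhE_poisson (R : realType) Nx (lam : R) (dx : 'I_Nx -> R) phi C0 :
  poisson lam dx phi C0 -> forall p, lam ^+ 2 * dh dx (Efield dx phi) p = C0 p - 1.
Proof.
case=> _ H p; rewrite -H.
have -> : dh dx (Efield dx phi) p = - dh dx (dh dx phi) p.
  by rewrite [LHS]dhE [in RHS]dhE /Efield; ring.
ring.
Qed.

Lemma coef_le (R : realType) Nx NH (C : nat -> 'I_Nx -> R) k :
  (k <= NH)%N -> coef NH C k = C k.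
Proof. by rewrite /coef => ->. Qed.

Lemma lem_solve (R : realType) (dt a b r : R) :
  dt != 0 -> (a - b) / dt + r = 0 -> a = b - dt * r.
Proof.
move=> h H.
have e : (a - b) / dt = - r by rewrite -[RHS]add0r -H; ring.
have -> : a = b + dt * ((a - b) / dt) by field.
by rewrite e; ring.
Qed.

Unset Implicit Arguments.

Theorem proposition3p2 (R : realType) (T0 lam dt : R) (NH Nx : nat)
  (dx : 'I_Nx -> R) (C C1 : nat -> nat -> 'I_Nx -> R) (phi : nat -> 'I_Nx -> R) :
  0 < T0 -> 0 < lam -> 0 < dt -> (0 < NH)%N -> (0 < Nx)%N ->
  (forall j, 0 < dx j) ->
  scheme_solution NH T0 lam dt dx C C1 phi ->
  forall n, (1 <= n)%N -> forall j : 'I_Nx,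
    let E := fun m => Efield dx (phi m) in
    lam ^+ 2 * ((dh dx (E n.+1) j - 2 * dh dx (E n) j + dh dx (E n.-1) j) / dt ^+ 2)
    + dh dx (fun i => E n.+1 i * C n.+1 0%N i) j
    = dh dx (dh dx (fun i => Num.sqrt 2 * T0 * coef NH (C1 n.+1) 2 i
                             + T0 * C n.+1 0%N i)) j
      + lam ^+ 2 * dt *
        dh dx (fun i => (E n.+1 i * dh dx (E n.+1) i - E n i * dh dx (E n) i) / dt) j.
Proof.
move=> T0p lamp dtp NHp Nxp dxp [P0 S] [//|k] _ j E; rewrite /E /= {E}.
have PE : forall m p, lam ^+ 2 * dh dx (Efield dx (phi m)) p = C m 0%N p - 1.
  case=> [|m] p; first exact: (dhE_poisson P0 p).
  have [[Po _] [C0eq _]] := S m.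
  by rewrite C0eq; exact: (dhE_poisson Po p).
have [[_ [A1 Ak]] [B0 B1]] := S k.+1.
have [[_ [_ Ak']] [B0' B1']] := S k.
set s := Num.sqrt T0.
have s0 : s != 0 by rewrite sqrtr_eq0 -ltNge.
have ss : s ^+ 2 = T0 by rewrite sqr_sqrtr // ltW.
have s1 : Num.sqrt (1%:R * T0) = s by rewrite mul1r.
have s2 : Num.sqrt (2 * T0) = Num.sqrt 2 * s by rewrite sqrtrM.
have sV : Num.sqrt (1%:R / T0) * s = 1.
  by rewrite mul1r /s -sqrtrM ?invr_ge0 ?ltW // mulVf ?sqrtr1 // gt_eqF.
have dt0 : dt != 0 by rewrite gt_eqF.
have dxj : dx j != 0 by rewrite gt_eqF.
have c1 : coef NH (C1 k.+2) 1 = C1 k.+2 1%N by rewrite coef_le.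
have c0 : coef NH (C1 k.+2) 0 = C k.+2 0%N by rewrite coef_le // B0.
have c1' : coef NH (C1 k.+1) 1 = C1 k.+1 1%N by rewrite coef_le.
have sV' : Num.sqrt (1%:R / T0) = s^-1.
  by apply: (mulIf s0); rewrite sV mulVf.
have Ca : forall m p, C m 0%N p = 1 + lam ^+ 2 * dh dx (Efield dx (phi m)) p.
  by move=> m p; rewrite PE; ring.
have K2 : C k.+2 0%N j = C k.+1 0%N j - dt * (s * dh dx (C1 k.+2 1%N) j).
  apply: lem_solve => //.
  have := Ak 0%N (leq0n _) (fun h => ltac:(discriminate)) j.
  by rewrite /= mul0r sqrtr0 mul0r addr0 s1 c1 -B0.
have K1 : C k.+1 0%N j = C k 0%N j - dt * (s * dh dx (C1 k.+1 1%N) j).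
  apply: lem_solve => //.
  have := Ak' 0%N (leq0n _) (fun h => ltac:(discriminate)) j.
  by rewrite /= mul0r sqrtr0 mul0r addr0 s1 c1' -B0'.
have F2 : forall p, C1 k.+2 1%N p = C k.+1 1%N p - dt * (s * dh dx (C k.+2 0%N) p
     + Num.sqrt 2 * s * dh dx (coef NH (C1 k.+2) 2) p - s^-1 * Efield dx (phi k.+2) p).
  move=> p; apply: lem_solve => //.
  have := A1 p.
  by rewrite c0 s2 -!addrA.
have F1 : forall p, C1 k.+1 1%N p = C k.+1 1%N p - dt * (s^-1 * Efield dx (phi k.+1) p
     * (lam ^+ 2 * dh dx (Efield dx (phi k.+1)) p)).
  move=> p.
  have := B1' 1%N NHp p.
  rewrite /coefm coef_le // eqxx sV' => H.
  have -> := @lem_solve _ _ _ _ _ dt0 H.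
  rewrite (Ca k.+1 p) /=; ring.
have L1 : lam ^+ 2 * ((dh dx (Efield dx (phi k.+2)) j - 2 * dh dx (Efield dx (phi k.+1)) j
     + dh dx (Efield dx (phi k)) j) / dt ^+ 2)
   = ((C k.+2 0%N j - 1) - 2 * (C k.+1 0%N j - 1) + (C k 0%N j - 1)) / dt ^+ 2.
  by rewrite -!PE; ring.
have K0 : C k 0%N j = C k.+1 0%N j + dt * (s * dh dx (C1 k.+1 1%N) j).
  by rewrite K1; ring.
rewrite L1 K2 K0 (@dhE _ _ _ (C1 k.+2 1%N)) (@dhE _ _ _ (C1 k.+1 1%N)) !F2 !F1.
rewrite (@dhE _ _ _ (dh dx _)) !dh_lin.
rewrite (@dhE _ _ _ (fun i => Efield dx (phi k.+2) i * C k.+2 0%N i)).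
rewrite (@dhE _ _ _ (fun i => (_ - _) / dt)).
rewrite !Ca -ss.
field.
by rewrite dxj dt0 s0.
Qed.
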